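(* Fix $T\ge0$. For $k\in\mathbb N_+$ let $\xi^k=\xi^{(a,k,T)}$. Then for all integers $\ell\ge k\ge1$, almost surely $\xi^\ell_t\ge\xi^k_t$ for all $t\in[0,T]$.
   Context: Let $\lambda>0$ and let $N$ be a Poisson process with intensity $\lambda$, arrival times $0<\sigma_1<\sigma_2<\cdots$, and natural filtration $\mathcal F_t=\sigma(N_s:s\le t)$. Let $F:[0,\infty)\to[0,\infty)$ be strictly increasing and strictly convex with $F(0)=0$. For $k\in\{0,1,\dots\}$ let $\mathcal A_k$ be the set of $(\mathcal F_t)$-adapted, integer-valued, nonnegative, non-increasing processes $\xi$ with $\xi_0=k$ whose values change only at arrival times of $N$, and $v(k,T)=\inf_{\xi\in\mathcal A_k}\mathbb E[\sum_{i:\sigma_i\le T}F(\xi_{\sigma_i-}-\xi_{\sigma_i})+F(\xi_T)]$. For $k\in\mathbb N_+$, $a(k,T)$ is the smallest minimizer over $a\in\{1,\dots,k\}$ of $v(k-a,T)+F(a)$, and $a(0,T)=0$. The inventory process $\xi^{(a,k,T)}$ is defined by $\xi^{(a,k,T)}_0=k$, constant between arrival times, and at each arrival time $\sigma_i\le T$: $\xi^{(a,k,T)}_{\sigma_i}=\xi^{(a,k,T)}_{\sigma_i-}-a(\xi^{(a,k,T)}_{\sigma_i-},T-\sigma_i)$. *)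

(* Defs.v *)
From HB Require Import structures.
From mathcomp Require Import all_boot all_order all_algebra.
From mathcomp Require Import all_classical all_reals all_analysis.
Set Implicit Arguments. Unset Strict Implicit. Unset Printing Implicit Defensive.
Import Order.TTheory GRing.Theory Num.Theory.
Local Open Scope classical_set_scope.
Local Open Scope ring_scope.

Section Defs.
Context {R : realType} {d : measure_display} {Omega : measurableType d}.

Definition poisson_pmf (mu : R) (n : nat) : R :=
  expR (- mu) * mu ^+ n / (n`!)%:R.

(* N is a Poisson process with intensity lam under P, with arrival times
   sigma (sigma 0 = 0 by convention, sigma i = i-th arrival time for i >= 1):
   - paths: 0 = sigma_0 < sigma_1 < sigma_2 < ... and N_t = n iff
     sigma_n <= t < sigma_{n+1} (so N is the counting process of the sigma_i);
   - each {N_t = n} is an event;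
   - finite-dimensional laws: increments over consecutive intervals are
     independent and Poisson(lam * length) distributed. *)
Definition poisson_process (P : probability Omega R) (lam : R)
    (N : R -> Omega -> nat) (sigma : nat -> Omega -> R) : Prop :=
  [/\ (forall w, sigma 0%N w = 0),
      (forall i w, sigma i w < sigma i.+1 w),
      (forall t w, 0 <= t -> sigma (N t w) w <= t < sigma (N t w).+1 w),
      (forall t (n : nat), measurable (N t @^-1` [set n])) &
      (forall (m : nat) (tt : nat -> R) (n : nat -> nat),
          0 <= tt 0%N -> (forall j, tt j <= tt j.+1) ->
          P [set w | forall j, (j < m)%N -> (N (tt j.+1) w - N (tt j) w)%N = n j]
          = (\prod_(j < m) poisson_pmf (lam * (tt j.+1 - tt j)) (n j))%:E)].

Definition nat_filtration (N : R -> Omega -> nat) (t : R) : set (set Omega) :=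
  <<s [set A | exists s (n : nat), 0 <= s <= t /\ A = N s @^-1` [set n]] >>.

(* the admissible class A_k: adapted, N-valued (hence integer-valued and
   nonnegative), non-increasing, xi_0 = k, and changing values only at
   arrival times (constant on each [sigma_i, sigma_{i+1})). *)
Definition admissible (N : R -> Omega -> nat) (sigma : nat -> Omega -> R)
    (k : nat) (xi : R -> Omega -> nat) : Prop :=
  [/\ (forall t (n : nat), 0 <= t -> nat_filtration N t (xi t @^-1` [set n])),
      (forall w, xi 0 w = k),
      (forall s t w, 0 <= s -> s <= t -> (xi t w <= xi s w)%N) &
      (forall i t w, sigma i w <= t < sigma i.+1 w -> xi t w = xi (sigma i w) w)].

(* cost of xi on [0,T]: sum over arrivals sigma_i <= T (i >= 1) of
   F(xi_{sigma_i -} - xi_{sigma_i}) plus F(xi_T); the left limit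
   xi_{sigma_i -} is the value on [sigma_{i-1}, sigma_i). *)
Definition cost (P : probability Omega R) (N : R -> Omega -> nat)
    (sigma : nat -> Omega -> R) (F : R -> R) (T : R) (xi : R -> Omega -> nat)
    : \bar R :=
  (\int[P]_w ((\sum_(1 <= i < (N T w).+1 | sigma i w <= T)
       F ((xi (sigma i.-1 w) w - xi (sigma i w) w)%N%:R)) + F (xi T w)%:R)%:E)%E.

Definition value (P : probability Omega R) (N : R -> Omega -> nat)
    (sigma : nat -> Omega -> R) (F : R -> R) (k : nat) (T : R) : \bar R :=
  ereal_inf [set cost P N sigma F T xi | xi in admissible N sigma k].

(* a(k,T): smallest minimiser over a in {1,...,k} of v(k-a,T) + F(a);
   a(0,T) = 0 (the sequence below is empty when k = 0). *)
Definition opt_sale (P : probability Omega R) (N : R -> Omega -> nat)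
    (sigma : nat -> Omega -> R) (F : R -> R) (k : nat) (T : R) : nat :=
  let c := fun a : nat => (value P N sigma F (k - a) T + (F a%:R)%:E)%E in
  let m := \big[Order.min/+oo%E]_(a <- iota 1 k) c a in
  head 0%N [seq a <- iota 1 k | c a == m].

Fixpoint inv_seq (P : probability Omega R) (N : R -> Omega -> nat)
    (sigma : nat -> Omega -> R) (F : R -> R) (k : nat) (T : R) (i : nat)
    (w : Omega) : nat :=
  match i with
  | 0%N => k
  | i'.+1 => let x := inv_seq P N sigma F k T i' w in
      if sigma i'.+1 w <= T
      then (x - opt_sale P N sigma F x (T - sigma i'.+1 w))%N else x
  end.

Definition inv_proc (P : probability Omega R) (N : R -> Omega -> nat)
    (sigma : nat -> Omega -> R) (F : R -> R) (k : nat) (T : R)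
    (t : R) (w : Omega) : nat :=
  inv_seq P N sigma F k T (N t w) w.

End Defs.

(* Main.v *)
Require Import Defs.
From HB Require Import structures.
From mathcomp Require Import all_boot all_order all_algebra.
From mathcomp Require Import all_classical all_reals all_analysis.
From mathcomp Require Import zify lra.
Import Order.TTheory GRing.Theory Num.Theory.
Local Open Scope classical_set_scope.
Local Open Scope ring_scope.

Section Helpers.
Variable R : realType.

Lemma bigmin_attained (c : nat -> \bar R) (s : seq nat) :
  (forall a, c a != +oo%E) -> s != [::] ->
  exists2 x, x \in s & \big[Order.min/+oo%E]_(a <- s) c a = c x.
Proof.
move=> hc; elim: s => [//|y s IH] _.
rewrite big_cons.
case: s IH => [|z s] IH.
  exists y; first by rewrite mem_head.
  by rewrite big_nil minEle leey.
have [x xs ->] := IH isT.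
rewrite minEle; case: ifP => _.
  by exists y; rewrite ?mem_head.
by exists x => //; rewrite in_cons xs orbT.
Qed.

Lemma bigmin_lb (c : nat -> \bar R) (s : seq nat) y :
  y \in s -> (\big[Order.min/+oo%E]_(a <- s) c a <= c y)%E.
Proof.
elim: s => [//|z s IH]; rewrite in_cons big_cons => /orP [/eqP ->|ys].
  by rewrite ge_min le_refl.
by rewrite ge_min (IH ys) orbT.
Qed.

Lemma head_min (h : nat -> R) (k : nat) : (1 <= k)%N ->
  let c := fun a : nat => (h a)%:E in
  let m := \big[Order.min/+oo%E]_(a <- iota 1 k) c a in
  let a := head 0%N [seq a <- iota 1 k | c a == m] in
  (1 <= a <= k)%N /\ forall a', (1 <= a' <= k)%N -> h a <= h a'.
Proof.
move=> hk c m a.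
have [x0 x0in hx0] : exists2 x, x \in iota 1 k & m = c x.
  by apply: bigmin_attained => //; rewrite -size_eq0 size_iota -lt0n.
have : a \in [seq a <- iota 1 k | c a == m].
  rewrite /a; case E: [seq a0 <- iota 1 k | c a0 == m] => [|y s].
    have : x0 \in [seq a0 <- iota 1 k | c a0 == m].
      by rewrite mem_filter x0in hx0 eqxx.
    by rewrite E.
  by rewrite mem_head.
rewrite mem_filter mem_iota => /andP [/eqP hca ha]; split.
  by move: ha; rewrite add1n ltnS.
move=> a' ha'.
have : (m <= c a')%E by apply: bigmin_lb; rewrite mem_iota add1n ltnS.
by rewrite -hca lee_fin.
Qed.

Lemma incr_strict (F : R -> R)
    (hFconv : forall x y t, 0 <= x -> 0 <= y -> x != y -> 0 < t < 1 ->
        F (t * x + (1 - t) * y) < t * F x + (1 - t) * F y) :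
  forall p q : nat, (p < q)%N ->
    F p.+1%:R - F p%:R < F q.+1%:R - F q%:R.
Proof.
have cons : forall r : nat, F r.+1%:R - F r%:R < F r.+2%:R - F r.+1%:R.
  move=> r.
  have := hFconv r%:R r.+2%:R (1/2) (ler0n _ _) (ler0n _ _).
  have hne : r%:R != r.+2%:R :> R by rewrite eqr_nat; lia.
  have ht : 0 < (1/2 : R) < 1 by apply/andP; split; lra.
  move=> /(_ hne ht).
  have -> : 1 / 2 * r%:R + (1 - 1 / 2) * r.+2%:R = r.+1%:R :> R.
    rewrite -[r.+2]addn2 -[r.+1]addn1 !natrD; lra.
  lra.
move=> p q; elim: q => [//|q IH]; rewrite ltnS leq_eqVlt => /orP [/eqP ->|/IH h].
  exact: cons.
exact: lt_trans h (cons q).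
Qed.

End Helpers.

Theorem lemma2p5 (R : realType) (d : measure_display) (Omega : measurableType d)
    (P : probability Omega R) (lam : R) (N : R -> Omega -> nat)
    (sigma : nat -> Omega -> R) (F : R -> R)
    (hlam : 0 < lam)
    (hN : poisson_process P lam N sigma)
    (hF0 : F 0 = 0)
    (hFpos : forall x, 0 <= x -> 0 <= F x)
    (hFinc : forall x y, 0 <= x -> x < y -> F x < F y)
    (hFconv : forall x y t, 0 <= x -> 0 <= y -> x != y -> 0 < t < 1 ->
        F (t * x + (1 - t) * y) < t * F x + (1 - t) * F y)
    (T : R) (hT : 0 <= T) (k l : nat) (hk : (1 <= k)%N) (hkl : (k <= l)%N) :
  {ae P, forall w, forall t, 0 <= t <= T ->
     (inv_proc P N sigma F k T t w <= inv_proc P N sigma F l T t w)%N}.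
Proof.
have hv : forall (j : nat) s, value P N sigma F j s \is a fin_num.
  move=> j s; have v0 : (0 <= value P N sigma F j s)%E.
    apply: le_ereal_inf_tmp => _ [xi _ <-].
    apply: integral_ge0 => w _; rewrite lee_fin.
    apply: addr_ge0; last exact/hFpos/ler0n.
    by apply: sumr_ge0 => i _; exact/hFpos/ler0n.
  rewrite ge0_fin_numE //.
  apply: (@le_lt_trans _ _ (F j%:R)%:E); last exact: ltry.
  apply: ge_ereal_inf; exists (F j%:R)%:E => //.
  exists (fun _ _ => j); last first.
    rewrite /cost.
    have -> : (fun w => ((\sum_(1 <= i < (N s w).+1 | sigma i w <= s)
       F ((j - j)%N%:R)) + F j%:R)%:E) = cst (F j%:R)%:E.
      apply: funext => w; rewrite subnn hF0 big1 ?add0r //.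
    rewrite integral_cst //; rewrite -[RHS]mule1; congr (_ * _)%E.
    exact: probability_setT.
  split => //.
  move=> t n _; rewrite /nat_filtration.
  case: (eqVneq n j) => [->|hnj].
    have -> : (fun _ : Omega => j) @^-1` [set j] = setT `\` set0.
      by rewrite setD0; apply/funext => w; apply/propext; split.
    apply: sigma_algebraCD; exact: sigma_algebra0.
  have -> : (fun _ : Omega => j) @^-1` [set n] = set0.
    apply/funext => w; apply/propext; split => // hw.
    by move: hnj; rewrite /= -hw eqxx.
  exact: sigma_algebra0.
pose g j s := fine (value P N sigma F j s).
have hopt : forall (x : nat) s, (1 <= x)%N ->
    (1 <= opt_sale P N sigma F x s <= x)%N /\
    forall a', (1 <= a' <= x)%N ->
      g (x - opt_sale P N sigma F x s)%N s + F (opt_sale P N sigma F x s)%:R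
      <= g (x - a')%N s + F a'%:R.
  move=> x s hx.
  pose cc := fun a : nat => (value P N sigma F (x - a) s + (F a%:R)%:E)%E.
  have Eo : opt_sale P N sigma F x s =
     head 0%N [seq a <- iota 1 x | cc a == \big[Order.min/+oo%E]_(a <- iota 1 x) cc a].
    by [].
  have E : cc = (fun a => (g (x - a)%N s + F a%:R)%:E).
    by apply: funext => a; rewrite /cc EFinD /g fineK.
  rewrite Eo E.
  exact: (@head_min R (fun a => g (x - a)%N s + F a%:R) x hx).
have mono1 : forall (x : nat) s,
    (x - opt_sale P N sigma F x s <= x.+1 - opt_sale P N sigma F x.+1 s)%N.
  move=> x s; case: x => [|x]; first by rewrite sub0n.
  have [/andP [ha1 ha2] hma] := hopt x.+1 s isT.
  have [/andP [hb1 hb2] hmb] := hopt x.+2 s isT.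
  set a := opt_sale P N sigma F x.+1 s in ha1 ha2 hma *.
  set b := opt_sale P N sigma F x.+2 s in hb1 hb2 hmb *.
  rewrite leqNgt; apply/negP => hlt.
  have hab : (a < b.-1)%N by lia.
  have i1 := hma b.-1 ltac:(lia).
  have i2 := hmb a.+1 ltac:(lia).
  have e1 : (x.+1 - b.-1 = x.+2 - b)%N by lia.
  have e2 : (x.+2 - a.+1 = x.+1 - a)%N by lia.
  rewrite e1 in i1; rewrite e2 in i2.
  have := @incr_strict R F hFconv _ _ hab.
  have -> : b.-1.+1 = b by lia.
  lra.
have mono : forall (x y : nat) s, (x <= y)%N ->
    (x - opt_sale P N sigma F x s <= y - opt_sale P N sigma F y s)%N.
  move=> x y s /subnK <-; elim: (y - x)%N => [//|n IH].
  exact: leq_trans IH (mono1 _ _).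
have hseq : forall i w, (inv_seq P N sigma F k T i w <= inv_seq P N sigma F l T i w)%N.
  move=> i w; elim: i => [//|i IH] /=.
  case: ifP => _ //; exact: mono.
apply: aeW => w t _; exact: hseq.
Qed.
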